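(* Let $G$ be a group generated by $x_1,\dots,x_n$, with finite commutator subgroup $C=[G,G]$, such that $G/C$ is free abelian of rank $n$ with basis the images of $x_1,\dots,x_n$. Let $Z$ be the center of $G$ and $Z_{CG}=Z\cap C$. Then there is a subgroup $\widetilde Z\le Z$ with $\widetilde Z\cong\mathbb Z^n$ and $\widetilde Z\cap Z_{CG}$ trivial such that $Z=\widetilde Z\,Z_{CG}$ (a direct product). Moreover $\mathrm{rank}(Z)=n+\mathrm{rank}(Z_{CG})$.
   Context: The rank of a group is the minimal cardinality of a generating set. *)

(* Defs.v *)
From mathcomp Require Import all_boot all_algebra.
From Stdlib Require Import List.
Set Implicit Arguments. Unset Strict Implicit. Unset Printing Implicit Defensive.
Import GRing.Theory.
Local Open Scope ring_scope.

Record group := Group {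
  carrier :> Type;
  gmul : carrier -> carrier -> carrier;
  ginv : carrier -> carrier;
  gone : carrier;
  gmulA : forall a b c, gmul a (gmul b c) = gmul (gmul a b) c;
  gmul1 : forall a, gmul gone a = a;
  gmulV : forall a, gmul (ginv a) a = gone
}.

Section Defs.
Variable G : group.
Local Notation "a * b" := (gmul a b).

Definition subgroup (S : G -> Prop) : Prop :=
  S (gone G) /\ (forall a b, S a -> S b -> S (a * b)) /\ (forall a, S a -> S (ginv a)).

Definition gen (A : G -> Prop) : G -> Prop :=
  fun g => forall S, subgroup S -> (forall a, A a -> S a) -> S g.

Definition commutator (a b : G) : G := ginv a * ginv b * a * b.

Definition derived : G -> Prop :=
  gen (fun g => exists a b, g = commutator a b).

Definition center : G -> Prop := fun g => forall h, g * h = h * g.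

Definition finite_set (S : G -> Prop) : Prop :=
  exists s : list G, forall g, S g -> In g s.

Definition zpow (g : G) (k : int) : G :=
  match k with
  | Posz m => iter m (gmul g) (gone G)
  | Negz m => ginv (iter m.+1 (gmul g) (gone G))
  end.

Definition zprod (n : nat) (x : 'I_n -> G) (k : 'I_n -> int) : G :=
  foldr (fun i acc => zpow (x i) (k i) * acc) (gone G) (enum 'I_n).

Definition generates (S : G -> Prop) (m : nat) (y : 'I_m -> G) : Prop :=
  forall g, S g <-> gen (fun a => exists i, a = y i) g.

Definition has_rank (S : G -> Prop) (r : nat) : Prop :=
  (exists y : 'I_r -> G, generates S y) /\
  (forall (m : nat) (y : 'I_m -> G), generates S y -> (r <= m)%N).

Definition iso_Zn (S : G -> Prop) (n : nat) : Prop :=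
  exists f : 'rV[int]_n -> G,
    (forall a b, f (a + b) = f a * f b) /\ injective f /\
    (forall g, S g <-> exists a, f a = g).
End Defs.

(* Main.v *)
Require Import Defs.
From mathcomp Require Import all_boot all_algebra.
From Stdlib Require Import List.
From Stdlib Require Import ClassicalEpsilon Classical Setoid Morphisms.
Set Implicit Arguments. Unset Strict Implicit. Unset Printing Implicit Defensive.
Import GRing.Theory.
Local Notation "a ** b" := (gmul a b) (at level 40, left associativity).


Section GroupBasics.
Variable G : group.


Lemma gmulVr (a : G) : a ** ginv a = gone G.
Proof.
have h : ginv (ginv a) ** ginv a = gone G := gmulV _.
rewrite -(gmul1 (a ** ginv a)) -{1}h -gmulA (gmulA (ginv a)) gmulV gmul1. exact: gmulV.
Qed.
Lemma gmul1r (a : G) : a ** gone G = a.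
Proof. by rewrite -(gmulV a) gmulA gmulVr gmul1. Qed.
Lemma gmulK (a b : G) : ginv a ** (a ** b) = b.
Proof. by rewrite gmulA gmulV gmul1. Qed.
Lemma gmulKV (a b : G) : a ** (ginv a ** b) = b.
Proof. by rewrite gmulA gmulVr gmul1. Qed.
Lemma gmulI (a b c : G) : a ** b = a ** c -> b = c.
Proof. by move=> h; rewrite -(gmulK a b) h gmulK. Qed.
Lemma gmulIr (a b c : G) : b ** a = c ** a -> b = c.
Proof. by move=> h; rewrite -(gmul1r b) -(gmulVr a) gmulA h -gmulA gmulVr gmul1r. Qed.
Lemma ginv_uniq (a b : G) : a ** b = gone G -> ginv a = b.
Proof. by move=> h; apply: (@gmulI a); rewrite gmulVr h. Qed.
Lemma ginvK (a : G) : ginv (ginv a) = a.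
Proof. by apply: ginv_uniq; rewrite gmulV. Qed.
Lemma ginvM (a b : G) : ginv (a ** b) = ginv b ** ginv a.
Proof. by apply: ginv_uniq; rewrite -gmulA gmulKV gmulVr. Qed.
Lemma ginv1 : ginv (gone G) = gone G.
Proof. by apply: ginv_uniq; rewrite gmul1. Qed.
End GroupBasics.

Ltac gsimpl := repeat (rewrite ?ginvM ?ginvK ?ginv1 -?gmulA ?gmulK ?gmulKV ?gmul1 ?gmul1r ?gmulVr ?gmulV).

Section Sub.
Variable G : group.


Lemma sg1 (S : G -> Prop) : subgroup S -> S (gone G). Proof. by case. Qed.
Lemma sgM (S : G -> Prop) a b : subgroup S -> S a -> S b -> S (a ** b). Proof. by case=> _ []; auto. Qed.
Lemma sgV (S : G -> Prop) a : subgroup S -> S a -> S (ginv a). Proof. by case=> _ []; auto. Qed.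

Lemma gen_sg (A : G -> Prop) : subgroup (gen A).
Proof.
split; first by move=> S [].
split=> [a b ha hb S hS hA|a ha S hS hA]; first exact: sgM (ha S hS hA) (hb S hS hA).
exact: sgV (ha S hS hA).
Qed.
Lemma gen_in (A : G -> Prop) a : A a -> gen A a.
Proof. by move=> h S _ hA; apply: hA. Qed.
Lemma gen_min (A S : G -> Prop) : subgroup S -> (forall a, A a -> S a) -> forall g, gen A g -> S g.
Proof. by move=> hS hA g hg; apply: hg. Qed.

Definition npow (g : G) m := iter m (gmul g) (gone G).

Lemma sg_npow (S : G -> Prop) (g : G) m : subgroup S -> S g -> S (npow g m).
Proof. by move=> hS hg; elim: m => [|m ih] /=; [exact: sg1|exact: sgM]. Qed.
Lemma sg_zpow (S : G -> Prop) (g : G) k : subgroup S -> S g -> S (zpow g k).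
Proof. move=> hS hg; case: k => m /=; [exact: sg_npow|apply: sgV => //; exact: (sg_npow m.+1)]. Qed.

Definition cent (g : G) := fun h => g ** h = h ** g.
Lemma cent_sg g : subgroup (cent g).
Proof.
rewrite /cent; split; first by rewrite gmul1 gmul1r.
split=> [a b ha hb|a ha]; first by rewrite gmulA ha -gmulA hb gmulA.
apply: (@gmulI _ a); rewrite gmulA -ha -gmulA gmulVr gmul1r gmulKV //.
Qed.
Lemma center_sg : subgroup (@center G).
Proof.
split; first by move=> h; rewrite gmul1 gmul1r.
split=> [a b ha hb h|a ha h]; first by rewrite -gmulA hb gmulA ha gmulA.
have [_ [_ hv]] := cent_sg h; symmetry; apply: hv; by rewrite /cent ha.
Qed.

Lemma npowS (g : G) m : npow g m.+1 = npow g m ** g.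
Proof.
elim: m => [|m ih]; first by rewrite /= gmul1 gmul1r.
by change (g ** npow g m.+1 = (g ** npow g m) ** g); rewrite ih gmulA.
Qed.
Lemma npowD (g : G) a b : npow g (a + b) = npow g a ** npow g b.
Proof. by elim: a => [|a ih]; rewrite ?gmul1 // addSn /= ih gmulA. Qed.

Lemma zpowS (g : G) (k : int) : zpow g (k + 1)%R = zpow g k ** g.
Proof.
case: k => [m|m].
  have -> : (Posz m + 1)%R = Posz m.+1 by rewrite -addn1.
  exact: npowS.
case: m => [|m].
  have -> : (Negz 0 + 1)%R = Posz 0 by [].
  rewrite /zpow /=.
  by rewrite gmul1r gmulV.
have -> : (Negz m.+1 + 1)%R = Negz m by rewrite !NegzE -(addn1 m.+1) PoszD opprD addrK.
by rewrite /zpow [iter m.+2 _ _]/= ginvM -gmulA gmulV gmul1r.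
Qed.

Lemma zpowSV (g : G) (k : int) : zpow g (k - 1)%R = zpow g k ** ginv g.
Proof. by rewrite -{2}(subrK 1%R k) zpowS -gmulA gmulVr gmul1r. Qed.

Lemma zpowD (g : G) (a b : int) : zpow g (a + b)%R = zpow g a ** zpow g b.
Proof.
elim/int_rect: b => [|n ih|n ih].
- by rewrite addr0 gmul1r.
- by rewrite -addn1 PoszD addrA !zpowS ih gmulA.
- by rewrite -addn1 PoszD opprD !addrA !zpowSV ih gmulA.
Qed.

Lemma zpow0 (g : G) : zpow g 0 = gone G. Proof. by []. Qed.
Lemma zpow1 (g : G) : zpow g 1 = g. Proof. by rewrite /= gmul1r. Qed.

Lemma zpowN (g : G) (k : int) : zpow g (- k)%R = ginv (zpow g k).
Proof.
have h := zpowD g (- k) k; rewrite addNr zpow0 in h.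
by rewrite -(ginv_uniq (esym h)) ginvK.
Qed.

Lemma zpow_cent (g h : G) k : g ** h = h ** g -> g ** zpow h k = zpow h k ** g.
Proof. by move=> c; apply: (sg_zpow k (cent_sg g)). Qed.

Lemma npow_zpow (g : G) (m : nat) : npow g m = zpow g m. Proof. by []. Qed.

Lemma zpowM (g h : G) k : g ** h = h ** g -> zpow (g ** h) k = zpow g k ** zpow h k.
Proof.
move=> c.
have hn : forall m : nat, zpow (g ** h) m = zpow g m ** zpow h m.
  elim=> [|m ih]; first by rewrite /= gmul1r.
  rewrite -addn1 PoszD !zpowS ih.
  rewrite -!gmulA; congr (_ ** _); rewrite !gmulA; congr (_ ** _).
  by rewrite (zpow_cent m c).
case: k => m; first exact: hn.
rewrite NegzE !zpowN hn ginvM.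
have c' : zpow g m.+1 ** zpow h m.+1 = zpow h m.+1 ** zpow g m.+1.
  apply: (sg_zpow m.+1 (cent_sg _)); rewrite /cent.
  by symmetry; apply: zpow_cent.
by rewrite -ginvM c' ginvM.
Qed.
End Sub.


Module PB.

Section Derived.
Variable G : group.

Lemma derived_sg : subgroup (@derived G). Proof. exact: gen_sg. Qed.
Lemma derived_comm (a b : G) : derived (commutator a b).
Proof. by apply: gen_in; exists a, b. Qed.

Lemma derived_conj (c h : G) : derived c -> derived (ginv h ** c ** h).
Proof.
move=> dc; move: h; apply: (gen_min (S := fun c => forall h, derived (ginv h ** c ** h))) dc.
- split; first by move=> h; rewrite gmul1r gmulV; exact: sg1 derived_sg.
  split=> [a b ha hb h|a ha h].
    have -> : ginv h ** (a ** b) ** h = (ginv h ** a ** h) ** (ginv h ** b ** h) by gsimpl.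
    exact: sgM derived_sg (ha h) (hb h).
  have -> : ginv h ** ginv a ** h = ginv (ginv h ** a ** h) by gsimpl.
  exact: sgV derived_sg (ha h).
- move=> _ [a [b ->]] h.
  have -> : ginv h ** commutator a b ** h = commutator (ginv h ** a ** h) (ginv h ** b ** h).
    by rewrite /commutator; gsimpl.
  exact: derived_comm.
Qed.

Definition eqC (a b : G) := derived (ginv a ** b).

Lemma eqC_refl a : eqC a a. Proof. by rewrite /eqC gmulV; exact: sg1 derived_sg. Qed.
Lemma eqC_sym a b : eqC a b -> eqC b a.
Proof. by rewrite /eqC => h; have := sgV derived_sg h; gsimpl. Qed.
Lemma eqC_trans a b c : eqC a b -> eqC b c -> eqC a c.
Proof. by rewrite /eqC => h1 h2; have := sgM derived_sg h1 h2; gsimpl. Qed.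
Lemma eqC_mul a a' b b' : eqC a a' -> eqC b b' -> eqC (a ** b) (a' ** b').
Proof.
rewrite /eqC => h1 h2.
have := sgM derived_sg (derived_conj b h1) h2.
by rewrite ginvM; gsimpl.
Qed.
Lemma eqC_inv a b : eqC a b -> eqC (ginv a) (ginv b).
Proof.
rewrite /eqC => h; have := derived_conj (ginv b) (sgV derived_sg h).
by gsimpl.
Qed.
Lemma eqC_comm a b : eqC (a ** b) (b ** a).
Proof. by rewrite /eqC; have := derived_comm b a; rewrite /commutator; gsimpl. Qed.
Lemma eqC_derived a b : eqC a b -> derived a -> derived b.
Proof. by rewrite /eqC => h1 h2; have := sgM derived_sg h2 h1; gsimpl. Qed.
Lemma derived_eqC1 a : derived a -> eqC (gone G) a.
Proof. by rewrite /eqC ginv1 gmul1. Qed.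

End Derived.

End PB.
Import PB.

Module PC.
Local Open Scope ring_scope.

Section ZpDef.
Variable G : group.
Definition zpL m (y : 'I_m -> G) (s : list 'I_m) (v : 'rV[int]_m) :=
  foldr (fun i acc => zpow (y i) (v ord0 i) ** acc) (gone G) s.
Definition zp m (y : 'I_m -> G) (v : 'rV[int]_m) := zpL y (enum 'I_m) v.

Lemma zp_zprod m (y : 'I_m -> G) (v : 'rV[int]_m) : zp y v = zprod y (fun j => v ord0 j).
Proof. by []. Qed.

Lemma zpL_mem (T : G -> Prop) m (y : 'I_m -> G) s (v : 'rV[int]_m) :
  subgroup T -> (forall i, T (zpow (y i) (v ord0 i))) -> T (zpL y s v).
Proof. by move=> hT h; elim: s => [|i s ih] /=; [exact: sg1|exact: sgM]. Qed.

Lemma zp_mem (T : G -> Prop) m (y : 'I_m -> G) (v : 'rV[int]_m) :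
  subgroup T -> (forall i, T (y i)) -> T (zp y v).
Proof. by move=> hT h; apply: zpL_mem => // i; apply: sg_zpow. Qed.

Lemma zpL0 m (y : 'I_m -> G) s : zpL y s 0 = gone G.
Proof. by elim: s => //= i s ->; rewrite mxE gmul1. Qed.

Lemma zpL_delta m (y : 'I_m -> G) s (i : 'I_m) (c : int) : uniq s ->
  zpL y s (c *: delta_mx 0 i) = if i \in s then zpow (y i) c else gone G.
Proof.
elim: s => //= j s ih /andP[js us]; rewrite ih // inE !mxE.
case: (eqVneq j i) js => [->|ne] js /=.
  by rewrite (negPf js) mulr1 gmul1r.
by rewrite mulr0 gmul1.
Qed.

Lemma zp_delta m (y : 'I_m -> G) (i : 'I_m) (c : int) :
  zp y (c *: delta_mx 0 i) = zpow (y i) c.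
Proof. by rewrite /zp zpL_delta ?enum_uniq // mem_enum. Qed.
End ZpDef.

Section Generic.
Variable G : group.
Variable eqv : G -> G -> Prop.
Context {E : Equivalence eqv}.
Context {Pm : Proper (eqv ==> eqv ==> eqv) (@gmul G)}.
Context {Pi : Proper (eqv ==> eqv) (@ginv G)}.
Lemma zpow_congr (a b : G) k : eqv a b -> eqv (zpow a k) (zpow b k).
Proof.
move=> ab; elim/int_rect: k => [|k ih|k ih].
- reflexivity.
- by rewrite -addn1 PoszD !zpowS ih ab; reflexivity.
- by rewrite -addn1 PoszD opprD !zpowSV ih ab; reflexivity.
Qed.

Lemma zpL_congr m (y y' : 'I_m -> G) s (v : 'rV[int]_m) :
  (forall i, eqv (y i) (y' i)) -> eqv (zpL y s v) (zpL y' s v).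
Proof.
move=> h; elim: s => [|i s ih] /=; first reflexivity.
by rewrite ih (zpow_congr _ (h i)); reflexivity.
Qed.

Variable S : G -> Prop.
Hypothesis Ssg : subgroup S.
Hypothesis Scomm : forall a b, S a -> S b -> eqv (a ** b) (b ** a).
Variable m : nat.
Variable y : 'I_m -> G.
Hypothesis yS : forall i, S (y i).

Lemma zpL_add s (v w : 'rV[int]_m) : eqv (zpL y s (v + w)) (zpL y s v ** zpL y s w).
Proof.
elim: s => [|i s ih] /=; first by rewrite gmul1; reflexivity.
rewrite mxE zpowD ih.
have hA : S (zpL y s v) by apply: zpL_mem => // j; apply: sg_zpow.
have hw : S (zpow (y i) (w ord0 i)) by apply: sg_zpow.
rewrite -!gmulA (gmulA (zpow _ (w _ _))).
rewrite (Scomm hw hA).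
rewrite !gmulA; reflexivity.
Qed.

Lemma zp_add (v w : 'rV[int]_m) : eqv (zp y (v + w)) (zp y v ** zp y w).
Proof. exact: zpL_add. Qed.

Lemma zpL_opp s (v : 'rV[int]_m) : eqv (zpL y s (- v)) (ginv (zpL y s v)).
Proof.
have h := zpL_add s (- v) v; rewrite addNr zpL0 in h.
rewrite -[zpL y s (- v)]gmul1r -(gmulVr (zpL y s v)) gmulA -h gmul1; reflexivity.
Qed.

Lemma zpL_scale s (v : 'rV[int]_m) (t : int) : eqv (zpow (zpL y s v) t) (zpL y s (t *: v)).
Proof.
elim/int_rect: t => [|n ih|n ih].
- by rewrite scale0r zpL0 zpow0; reflexivity.
- by rewrite -addn1 PoszD zpowS ih scalerDl scale1r zpL_add; reflexivity.
- rewrite -addn1 PoszD opprD zpowSV ih scalerDl scaleN1r zpL_add zpL_opp; reflexivity.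
Qed.

Lemma zp_scale (v : 'rV[int]_m) (t : int) : eqv (zpow (zp y v) t) (zp y (t *: v)).
Proof. exact: zpL_scale. Qed.

Lemma zpL_mat k (U : 'M[int]_(k, m)) s (e : 'rV[int]_k) :
  eqv (zpL (fun i => zp y (row i U)) s e) (zp y (\sum_(i <- s) e ord0 i *: row i U)).
Proof.
elim: s => [|i s ih] /=; first by rewrite big_nil /zp zpL0; reflexivity.
by rewrite big_cons ih zp_scale zp_add; reflexivity.
Qed.

Lemma zp_mat k (U : 'M[int]_(k, m)) (e : 'rV[int]_k) :
  eqv (zp (fun i => zp y (row i U)) e) (zp y (e *m U)).
Proof.
rewrite /zp zpL_mat mulmx_sum_row big_enum /=; reflexivity.
Qed.
End Generic.

Section Central.
Variable G : group.

Lemma zpL_ext m (y y' : 'I_m -> G) s (v : 'rV[int]_m) :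
  (forall i, y i = y' i) -> zpL y s v = zpL y' s v.
Proof. by move=> h; elim: s => [|i s ih] //=; rewrite ih h. Qed.

Lemma zpL_mul m (p q : 'I_m -> G) s (v : 'rV[int]_m) :
  (forall i, center (p i)) -> (forall i, center (q i)) ->
  zpL (fun i => p i ** q i) s v = zpL p s v ** zpL q s v.
Proof.
move=> hp hq; elim: s => [|i s ih] /=; first by rewrite gmul1.
rewrite ih zpowM; last exact: hp.
have hc : center (zpow (q i) (v ord0 i)) by exact: (sg_zpow (v ord0 i) (@center_sg G) (hq i)).
by rewrite -!gmulA; congr (_ ** _); rewrite !gmulA; congr (_ ** _); rewrite hc.
Qed.
End Central.

End PC.
Import PC.

Module PL.
Import Num.Theory.
Local Open Scope ring_scope.

Definition pb (P : Prop) : bool := if excluded_middle_informative P then true else false.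
Lemma pbP (P : Prop) : reflect P (pb P).
Proof. by rewrite /pb; case: excluded_middle_informative => h; constructor. Qed.

Lemma choice_fun (A B : Type) (P : A -> B -> Prop) :
  (forall a, exists b, P a b) -> exists f : A -> B, forall a, P a (f a).
Proof.
move=> h; exists (fun a => proj1_sig (constructive_indefinite_description _ (h a))).
by move=> a; case: constructive_indefinite_description.
Qed.

Lemma lattice_basis n (L : 'rV[int]_n -> Prop) (D : nat) : (0 < D)%N ->
  (forall u v, L u -> L v -> L (u + v)) -> (forall c u, L u -> L (c *: u)) ->
  (forall i, L (D%:Z *: delta_mx 0 i)) ->
  exists B : 'M[int]_n, (forall i, L (row i B)) /\
    (forall v, L v -> exists a, v = a *m B) /\ (forall a : 'rV[int]_n, a *m B = 0 -> a = 0).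
Proof.
move=> D0 LD LZ Ld.
pose P (i : 'I_n) (p : nat) := (0 < p)%N /\ exists v, L v /\
   (forall j : 'I_n, (i < j)%N -> v 0 j = 0) /\ v 0 i = p%:Z.
have exP : forall i, exists p, pb (P i p).
  move=> i; exists D; apply/pbP; split=> //; exists (D%:Z *: delta_mx 0 i); split=> //.
  split=> [j ij|]; rewrite !mxE ?eqxx ?mulr1 //.
  by rewrite (_ : (j == i) = false) ?mulr0 // ; apply/negbTE; rewrite neq_ltn ij orbT.
pose p i := ex_minn (exP i).
have pP : forall i, P i (p i) /\ forall q, P i q -> (p i <= q)%N.
  move=> i; rewrite /p; case: ex_minnP => q /pbP hq hmin; split=> // r hr.
  by apply: hmin; apply/pbP.
have [vf hvf] := @choice_fun 'I_n 'rV[int]_n (fun (i : 'I_n) (v : 'rV[int]_n) => L v /\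
    (forall j : 'I_n, (i < j)%N -> v 0 j = 0) /\ v 0 i = (p i)%:Z)
   (fun i => match pP i with conj (conj _ h) _ => h end).
pose B := \matrix_(i, j) vf i 0 j.
have rowB : forall i, row i B = vf i by move=> i; apply/rowP => j; rewrite !mxE.
exists B; split; first by move=> i; rewrite rowB; case: (hvf i).
split; last first.
  move=> a aB.
  have trig : is_trig_mx B.
    by apply/is_trig_mxP => i j ij; rewrite mxE; case: (hvf i) => _ [h _]; exact: h.
  have dB : \det B != 0.
    rewrite det_trig //; apply/prodf_neq0 => k _; rewrite mxE; case: (hvf k) => _ [_ ->].
    by have [[hp _] _] := pP k; rewrite eqz_nat -lt0n.
  have : a *m B *m \adj B = 0 by rewrite aB mul0mx.
  rewrite -mulmxA mul_mx_adj mul_mx_scalar => /rowP h; apply/rowP => j.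
  by have := h j; rewrite !mxE => /eqP; rewrite mulf_eq0 (negPf dB) /= => /eqP.
suff H : forall t v, L v -> (forall j : 'I_n, (t <= j)%N -> v 0 j = 0) -> exists a, v = a *m B.
  by move=> v Lv; apply: (H n) => // j; rewrite leqNgt ltn_ord.
elim=> [|t ih] v Lv hv.
  exists 0; rewrite mul0mx; apply/rowP => j; rewrite mxE; exact: hv.
case: (ltnP t n) => [tn|nt]; last first.
  by apply: ih => // j; rewrite leqNgt (leq_trans (ltn_ord j) nt).
pose i := Ordinal tn.
have [[pi0 _] pmin] := pP i.
have [Lvi [vtri vdiag]] := hvf i.
pose q := divz (v 0 i) (p i)%:Z; pose r := modz (v 0 i) (p i)%:Z.
pose w := v + (- q) *: row i B.
have Lw : L w by apply: LD => //; apply: LZ; rewrite rowB.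
have w_i : w 0 i = r.
  rewrite /w !mxE vdiag /r {1}(divz_eq (v 0 i) (p i)%:Z) -/q.
  by rewrite mulNr addrAC addrN add0r.
have r0 : r = 0.
  have p0 : (p i)%:Z != 0 by rewrite eqz_nat -lt0n.
  have rge : 0 <= r := modz_ge0 _ p0.
  have rlt : r < (p i)%:Z by apply: ltz_pmod; rewrite ltz_nat.
  case: r rge rlt w_i => // -[|r'] // _ rlt w_i.
  have : P i r'.+1.
    split=> //; exists w; split=> //; split=> // j ij.
    by rewrite /w !mxE (vtri j ij) hv ?mulr0 ?addr0.
  by move=> /pmin; rewrite leqNgt -ltz_nat rlt.
have [a wa] : exists a, w = a *m B.
  apply: ih => // j; rewrite leq_eqVlt => /orP[/eqP tj|tj].
    have -> : j = i by apply/val_inj.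
    by rewrite w_i.
  by rewrite /w !mxE (vtri j tj) hv ?mulr0 ?addr0.
exists (a + q *: delta_mx 0 i).
rewrite mulmxDl -wa -scalemxAl -rowE /w -addrA -scalerDl addNr scale0r addr0 //.
Qed.

End PL.
Import PL.

Module PP.

Lemma central_power (G : group) (n : nat) (x : 'I_n -> G)
  (hgen : forall g : G, gen (fun a => exists i, a = x i) g)
  (hfin : finite_set (@derived G)) :
  exists D, (0 < D)%N /\ forall i, center (npow (x i) D).
Proof.
have [s hs] := hfin.
pose c (m : nat) (ij : 'I_n * 'I_n) := commutator (x ij.2) (npow (x ij.1) m).
pose T := {ffun 'I_n * 'I_n -> 'I_(length s)}.
have hT : forall m : nat, exists f : T, forall ij, List.nth (f ij) s (gone G) = c m ij.
  move=> m.
  have [g hg] : exists g : 'I_n * 'I_n -> 'I_(length s), forall ij, List.nth (g ij) s (gone G) = c m ij.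
    apply: (@choice_fun _ _ (fun ij (k : 'I_(length s)) => List.nth k s (gone G) = c m ij)) => ij.
    have [k [kl kn]] := In_nth s (c m ij) (gone G) (hs _ (derived_comm _ _)).
    by exists (Ordinal (introT ltP kl)).
  by exists (finfun g) => ij; rewrite ffunE.
have [h hh] := @choice_fun 'I_(#|T|.+1) T
   (fun m f => forall ij, List.nth (f ij) s (gone G) = c m ij) (fun m => hT m).
have : ~~ injectiveb h.
  apply/negP => /injectiveP inj; have := leq_card h inj.
  by rewrite card_ord ltnn.
case/injectivePn => m1 [m2 ne hm].
have key : forall a b : 'I_(#|T|.+1), (a < b)%N -> h a = h b ->
    exists D, (0 < D)%N /\ forall i, center (npow (x i) D).
  move=> a b ab hab; exists (b - a)%N; split; first by rewrite subn_gt0.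
  move=> i.
  have cx : forall j, npow (x i) (b - a) ** x j = x j ** npow (x i) (b - a).
    move=> j; have := hh a (i, j); rewrite hab hh /c /= => H.
    have hb : npow (x i) b = npow (x i) (b - a) ** npow (x i) a.
      by rewrite -npowD subnK // ltnW.
    move: H; rewrite /commutator hb; gsimpl => /gmulI /gmulI H.
    have H2 : x j = ginv (npow (x i) (b - a)) ** x j ** npow (x i) (b - a).
      apply: (@gmulIr _ (npow (x i) a)); rewrite -H; gsimpl; done.
    by rewrite {1}H2; gsimpl.
  move=> g; apply: (hgen g (cent (npow (x i) (b - a))) (cent_sg _)).
  by move=> _ [j ->]; rewrite /cent cx.
case: (ltngtP m1 m2) => [lt|gt|eq].
- exact: key lt hm.
- exact: key gt (esym hm).
- by move: ne; rewrite (val_inj eq) eqxx.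
Qed.

End PP.
Import PP.

Module PM.
Local Open Scope ring_scope.

Section Main.
Variables (G : group) (n : nat) (x : 'I_n -> G).
Hypothesis hgen : forall g : G, gen (fun a => exists i, a = x i) g.
Hypothesis hfin : finite_set (@derived G).
Hypothesis hbasis : forall k : 'I_n -> int, derived (zprod x k) -> forall i, k i = 0%R.

#[local] Instance eqC_Equivalence : Equivalence (@eqC G) :=
  Build_Equivalence _ (@eqC_refl G) (@eqC_sym G) (@eqC_trans G).
#[local] Instance eqC_mul_Proper : Proper (@eqC G ==> @eqC G ==> @eqC G) (@gmul G).
Proof. by move=> a a' ha b b' hb; apply: eqC_mul. Qed.
#[local] Instance eqC_inv_Proper : Proper (@eqC G ==> @eqC G) (@ginv G).
Proof. by move=> a a' ha; apply: eqC_inv. Qed.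
#[local] Instance eq_mul_Proper : Proper (@eq G ==> @eq G ==> @eq G) (@gmul G).
Proof. by move=> a a' -> b b' ->. Qed.
#[local] Instance eq_inv_Proper : Proper (@eq G ==> @eq G) (@ginv G).
Proof. by move=> a a' ->. Qed.

Lemma TrueSg : subgroup (fun _ : G => True). Proof. by []. Qed.
Lemma TrueComm (a b : G) : True -> True -> eqC (a ** b) (b ** a).
Proof. by move=> _ _; apply: eqC_comm. Qed.
Lemma CenterComm (a b : G) : center a -> center b -> a ** b = b ** a.
Proof. by move=> ha _; apply: ha. Qed.

Lemma xadd (v w : 'rV[int]_n) : eqC (zp x (v + w)) (zp x v ** zp x w).
Proof. exact: (zp_add TrueSg TrueComm). Qed.
Lemma xopp (v : 'rV[int]_n) : eqC (zp x (- v)) (ginv (zp x v)).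
Proof. exact: (zpL_opp TrueSg TrueComm). Qed.
Lemma xscale (v : 'rV[int]_n) t : eqC (zpow (zp x v) t) (zp x (t *: v)).
Proof. exact: (zp_scale TrueSg TrueComm). Qed.

Lemma nf g : exists v, eqC g (zp x v).
Proof.
refine (gen_min (S := fun g => exists v, eqC g (zp x v)) _ _ (hgen g)).
- split; first by exists 0; rewrite /zp zpL0; reflexivity.
  split=> [a b [v hv] [w hw]|a [v hv]].
    by exists (v + w); rewrite hv hw xadd; reflexivity.
  by exists (- v); rewrite hv xopp; reflexivity.
- move=> _ [i ->]; exists (delta_mx 0 i).
  by rewrite -(scale1r (delta_mx 0 i)) zp_delta zpow1; reflexivity.
Qed.

Lemma xder (v : 'rV[int]_n) : derived (zp x v) -> v = 0.
Proof.
move=> h; apply/rowP => i; rewrite mxE.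
exact: (hbasis (k := fun j => v ord0 j) h).
Qed.

Lemma xinj (v w : 'rV[int]_n) : eqC (zp x v) (zp x w) -> v = w.
Proof.
move=> h.
have e : eqC (ginv (zp x v) ** zp x w) (zp x (w - v)).
  by rewrite addrC xadd xopp; reflexivity.
have := xder (eqC_derived e h).
by move/eqP; rewrite subr_eq0 => /eqP.
Qed.


Definition cid := constructive_indefinite_description.
Definition Dn : nat := proj1_sig (cid (central_power hgen hfin)).
Lemma Dn_spec : (0 < Dn)%N /\ forall i, center (npow (x i) Dn).
Proof. by rewrite /Dn; case: cid. Qed.

Definition Lat (v : 'rV[int]_n) := exists z, center z /\ eqC z (zp x v).
Lemma Lat_add u v : Lat u -> Lat v -> Lat (u + v).
Proof.
move=> [z1 [c1 e1]] [z2 [c2 e2]]; exists (z1 ** z2); split; first exact: (sgM (@center_sg G) c1 c2).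
by rewrite e1 e2 xadd; reflexivity.
Qed.
Lemma Lat_scale c u : Lat u -> Lat (c *: u).
Proof.
move=> [z [cz e]]; exists (zpow z c); split; first exact: sg_zpow (@center_sg G) cz.
by rewrite (zpow_congr c e) xscale; reflexivity.
Qed.
Lemma Lat_delta i : Lat ((Dn)%:Z *: delta_mx 0 i).
Proof.
exists (npow (x i) Dn); split; first by case: Dn_spec.
by rewrite zp_delta; reflexivity.
Qed.

Definition Bm : 'M[int]_n :=
  proj1_sig (cid (lattice_basis (proj1 Dn_spec) Lat_add Lat_scale Lat_delta)).
Lemma Bm_spec : (forall i, Lat (row i Bm)) /\
    (forall v, Lat v -> exists a, v = a *m Bm) /\ (forall a : 'rV[int]_n, a *m Bm = 0 -> a = 0).
Proof. by rewrite /Bm; case: cid. Qed.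

Definition zf (i : 'I_n) : G := proj1_sig (cid (proj1 Bm_spec i)).
Lemma zf_spec i : center (zf i) /\ eqC (zf i) (zp x (row i Bm)).
Proof. by rewrite /zf; case: cid. Qed.

Definition F (a : 'rV[int]_n) := zp zf a.

Lemma F_center a : center (F a).
Proof. by apply: zp_mem; [exact: (@center_sg G)| move=> i; case: (zf_spec i)]. Qed.
Lemma F_add a b : F (a + b) = F a ** F b.
Proof. exact: (zp_add (@center_sg G) CenterComm (fun i => proj1 (zf_spec i))). Qed.
Lemma F0 : F 0 = gone G.
Proof. exact: zpL0. Qed.
Lemma F_opp a : F (- a) = ginv (F a).
Proof. exact: (zpL_opp (@center_sg G) CenterComm (fun i => proj1 (zf_spec i))). Qed.
Lemma F_eqC a : eqC (F a) (zp x (a *m Bm)).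
Proof.
rewrite /F /zp (zpL_congr _ _ (fun i => proj2 (zf_spec i))).
exact: (zp_mat TrueSg TrueComm).
Qed.
Lemma F_inj a b : F a = F b -> a = b.
Proof.
move=> e; have : eqC (zp x (a *m Bm)) (zp x (b *m Bm)).
  by rewrite -F_eqC -F_eqC e; reflexivity.
move/xinj => /eqP; rewrite -subr_eq0 -mulmxBl => /eqP /(proj2 (proj2 Bm_spec)) /eqP.
by rewrite subr_eq0 => /eqP.
Qed.
Lemma F_der a : derived (F a) -> a = 0.
Proof.
move=> d; have := xder (eqC_derived (F_eqC a) d).
exact: (proj2 (proj2 Bm_spec)).
Qed.

Lemma decomp z : center z -> exists a b, (center b /\ derived b) /\ z = F a ** b.
Proof.
move=> cz; have [v hv] := nf z.
have [a ha] := proj1 (proj2 Bm_spec) v (ex_intro _ z (conj cz hv)).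
exists a, (ginv (F a) ** z); split; last by gsimpl.
split; first by apply: sgM (@center_sg G) _ cz; apply: sgV (@center_sg G) (F_center a).
have : eqC (F a) z by rewrite F_eqC -ha hv; reflexivity.
done.
Qed.

Lemma part1 : exists Zt : G -> Prop,
      subgroup Zt /\
      (forall g, Zt g -> center g) /\
      iso_Zn Zt n /\
      (forall g, Zt g -> center g -> derived g -> g = gone G) /\
      (forall z, center z <->
         exists a b, Zt a /\ (center b /\ derived b) /\ z = gmul a b).
Proof.
exists (fun g => exists a, F a = g); split.
  split; first by exists 0; exact: F0.
  split=> [_ _ [a <-] [b <-]|_ [a <-]]; first by exists (a + b); rewrite F_add.
  by exists (- a); rewrite F_opp.
split; first by move=> _ [a <-]; exact: F_center.
split.
  exists F; split; first exact: F_add.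
  by split=> // a b; exact: F_inj.
split; first by move=> _ [a <-] _ /F_der ->; exact: F0.
move=> z; split; first by move/decomp => [a [b [hb ->]]]; exists (F a), b; split=> //; exists a.
move=> [_ [b [[a <-] [[cb _] ->]]]]; apply: sgM (@center_sg G) (F_center a) cb.
Qed.

Definition ZCG (g : G) := center g /\ derived g.
Lemma ZCG_sg : subgroup ZCG.
Proof.
split; first by split; [exact: (sg1 (@center_sg G))|exact: (sg1 (@derived_sg G))].
split=> [a b [ca da] [cb db]|a [ca da]].
  by split; [exact: (sgM (@center_sg G) ca cb)|exact: (sgM (@derived_sg G) da db)].
by split; [exact: (sgV (@center_sg G) ca)|exact: (sgV (@derived_sg G) da)].
Qed.

Lemma ZCG_fin : exists r, pb (exists y : 'I_r -> G, generates ZCG y).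
Proof.
have [s hs] := hfin.
exists (length s); apply/pbP.
pose y (k : 'I_(length s)) := if pb (ZCG (List.nth k s (gone G))) then List.nth k s (gone G) else gone G.
exists y => g; split.
  move=> zg; have [k [kl kn]] := In_nth s g (gone G) (hs _ (proj2 zg)).
  apply: gen_in; exists (Ordinal (introT ltP kl)); rewrite /y /=.
  by case: pbP => //; rewrite kn.
apply: gen_min; first exact: ZCG_sg.
move=> _ [k ->]; rewrite /y; case: pbP => // _; exact: (sg1 ZCG_sg).
Qed.

Definition rk := ex_minn ZCG_fin.
Lemma rk_spec : (exists y : 'I_rk -> G, generates ZCG y) /\
  forall m (y : 'I_m -> G), generates ZCG y -> (rk <= m)%N.
Proof.
rewrite /rk; case: ex_minnP => r /pbP h hmin; split=> // m y hy.
by apply: hmin; apply/pbP; exists y.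
Qed.

Lemma gen_mono (A B : G -> Prop) : (forall a, A a -> gen B a) -> forall g, gen A g -> gen B g.
Proof. move=> h; apply: gen_min => //; exact: gen_sg. Qed.

Lemma upper : exists y : 'I_(n + rk) -> G, generates (@center G) y.
Proof.
have [[w hw] _] := rk_spec.
pose y (k : 'I_(n + rk)) := match fintype.split k with inl i => zf i | inr j => w j end.
have yl : forall i, y (lshift rk i) = zf i by move=> i; rewrite /y (unsplitK (inl _ i)).
have yr : forall j, y (rshift n j) = w j by move=> j; rewrite /y (unsplitK (inr _ j)).
exists y => g; split.
  move/decomp => [a [b [zb ->]]].
  apply: sgM (gen_sg _) _ _.
    apply: zp_mem; first exact: gen_sg.
    by move=> i; apply: gen_in; exists (lshift rk i).
  move: zb => /hw; apply: gen_mono => _ [j ->]; apply: gen_in; exists (rshift n j).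
  by rewrite yr.
apply: gen_min; first exact: (@center_sg G).
move=> _ [k ->]; rewrite /y; case: fintype.split => [i|j]; first by case: (zf_spec i).
have : gen (fun a => exists i, a = w i) (w j) by apply: gen_in; exists j.
by move/hw => [].
Qed.

Lemma gen_zp m (y : 'I_m -> G) : (forall i, center (y i)) ->
  forall g, gen (fun a => exists i, a = y i) g -> exists e, g = zp y e.
Proof.
move=> cy; apply: gen_min.
- split; first by exists 0; rewrite /zp zpL0.
  split=> [_ _ [v ->] [w ->]|_ [v ->]].
    by exists (v + w); rewrite (zp_add (@center_sg G) CenterComm cy).
  by exists (- v); rewrite /zp (zpL_opp (@center_sg G) CenterComm cy).
- by move=> _ [i ->]; exists (delta_mx 0 i); rewrite -(scale1r (delta_mx 0 i)) zp_delta zpow1.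
Qed.

Lemma cast_lt (m : nat) (t : 'I_(m - n)) : (n + t < m)%N.
Proof. by rewrite -ltn_subRL. Qed.

Lemma lower m (y : 'I_m -> G) : generates (@center G) y -> (n + rk <= m)%N.
Proof.
move=> hy.
have cy : forall j, center (y j) by move=> j; apply/(hy (y j)); apply: gen_in; exists j.
have zpy : forall g, center g -> exists e, g = zp y e by move=> g /(hy g); exact: gen_zp.
have [af haf] : exists af : 'I_m -> 'rV[int]_n, forall j, exists b, ZCG b /\ y j = F (af j) ** b.
  apply: (@choice_fun _ _ (fun j a => exists b, ZCG b /\ y j = F a ** b)) => j.
  by have [a [b [zb e]]] := decomp (cy j); exists a, b.
have [bf hbf] := @choice_fun _ _ (fun j b => ZCG b /\ y j = F (af j) ** b) haf.
pose M := \matrix_(j, i) af j 0 i.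
have rowM : forall j, row j M = af j by move=> j; apply/rowP => i; rewrite !mxE.
have bfc : forall j, center (bf j) by move=> j; case: (hbf j) => [[]].
have Fc : forall j, center (F (row j M)) by move=> j; exact: F_center.
have yd : forall j, y j = F (row j M) ** bf j by move=> j; rewrite rowM; case: (hbf j).
have bZ : forall e, ZCG (zp bf e).
  by move=> e; apply: zp_mem; [exact: ZCG_sg|move=> j; case: (hbf j)].
have zpyF : forall e, zp y e = F (e *m M) ** zp bf e.
  move=> e; rewrite /zp (zpL_ext _ _ yd) zpL_mul //.
  congr (_ ** _).
  exact: (zp_mat (@center_sg G) CenterComm (fun i => proj1 (zf_spec i))).
have ex : forall i : 'I_n, exists e : 'rV[int]_m, e *m M = delta_mx 0 i.
  move=> i; have [e he] := zpy _ (F_center (delta_mx 0 i)).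
  exists e; rewrite zpyF in he.
  have d : derived (F (delta_mx 0 i - e *m M)).
    by rewrite addrC F_add F_opp he; gsimpl; case: (bZ e).
  by move/F_der: d => /eqP; rewrite subr_eq0 => /eqP.
have [ef hef] := @choice_fun _ _ (fun i e => e *m M = delta_mx 0 i) ex.
pose W := \matrix_(i, j) ef i 0 j.
have WM : W *m M = 1%:M.
  apply/row_matrixP => i; rewrite row_mul row1.
  have -> : row i W = ef i by apply/rowP => j; rewrite !mxE.
  exact: hef.
have [L0 L0u [R Ru [d _ hM]]] := int_Smith_normal_form M.
set Dm := \matrix_(i, j) _ in hM.
pose U := invmx L0.
have UM : U *m M = Dm *m R by rewrite hM /U -!mulmxA mulKmx.
pose X := R *m W *m L0.
have XD : X *m Dm = 1%:M.
  have : R *m (W *m M) *m invmx R = 1%:M by rewrite WM mulmx1 mulmxV.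
  by rewrite hM /X !mulmxA mulmxK.
have dnz : forall j : 'I_n, exists i : 'I_m, (i == j :> nat) && (d`_i != 0).
  move=> j.
  have := congr1 (fun A : 'M[int]_n => A j j) XD; rewrite !mxE eqxx /= => hs.
  case: (pickP (fun i : 'I_m => d`_i *+ (i == j :> nat) != 0)) => [i|none].
    move=> hi; exists i; apply/andP; split.
      by move: hi; case: (i == j :> nat) => //; rewrite mulr0n eqxx.
    by move: hi; apply: contra => /eqP ->; rewrite mul0rn.
  move: hs; rewrite big1; first by move/eqP; rewrite eq_sym oner_eq0.
  move=> i _; have := none i; move/negbFE/eqP => h.
  have -> : Dm i j = 0 by rewrite /Dm mxE; exact: h.
  by rewrite mulr0.
have nm : (n <= m)%N.
  rewrite leqNgt; apply/negP => mn; have [i /andP[/eqP e _]] := dnz (Ordinal mn).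
  by have := ltn_ord i; rewrite e /= ltnn.
have dnz' : forall i : 'I_m, (i < n)%N -> d`_i != 0.
  by move=> i lt; have [k /andP[/eqP e h]] := dnz (Ordinal lt); move: h; rewrite e.
pose y' (i : 'I_m) := zp y (row i U).
have zpy' : forall e, zp y' e = zp y (e *m U).
  exact: (zp_mat (@center_sg G) CenterComm cy).
have yZ : forall i : 'I_m, (n <= i)%N -> ZCG (y' i).
  move=> i ni.
  have r0 : row i U *m M = 0.
    rewrite -row_mul UM row_mul.
    have -> : row i Dm = 0.
      apply/rowP => j; rewrite !mxE.
      have -> : (i == j :> nat) = false.
        by apply/negbTE; rewrite neq_ltn (leq_trans (ltn_ord j) ni) orbT.
      by rewrite mulr0n.
    by rewrite mul0mx.
  by rewrite /y' zpyF r0 F0 gmul1.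
have y'c : forall i, center (y' i) by move=> i; apply: zp_mem; [exact: (@center_sg G)|exact: cy].
pose w (t : 'I_(m - n)) := y' (Ordinal (cast_lt t)).
suff hw : generates ZCG w.
  have := proj2 rk_spec _ _ hw.
  by rewrite -(leq_add2l n) subnKC.
move=> g; split; last first.
  apply: gen_min; first exact: ZCG_sg.
  move=> _ [t ->]; apply: yZ => /=; exact: leq_addr.
move=> [cg dg].
have [e ge] := zpy g cg.
have [e' ee] : exists e', e = e' *m U by exists (e *m L0); rewrite /U mulmxK.
pose top := \row_(i < m) (if (i < n)%N then e' 0 i else 0).
pose bot := e' - top.
have gsplit : g = zp y' top ** zp y' bot.
  rewrite -(zp_add (@center_sg G) CenterComm y'c).
  have -> : top + bot = e' by rewrite /bot addrC subrK.
  by rewrite zpy' -ee -ge.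
have botgen : gen (fun a => exists t, a = w t) (zp y' bot).
  apply: zpL_mem; first exact: gen_sg.
  move=> i; case: (ltnP i n) => [lt|ge'].
    have -> : bot 0 i = 0 by rewrite /bot /top !mxE lt subrr.
    exact: (sg1 (gen_sg _)).
  have ht : (i - n < m - n)%N by rewrite ltn_subRL subnKC.
  apply: (sg_zpow _ (gen_sg _)).
  apply: gen_in; exists (Ordinal ht); rewrite /w; congr y'; apply/val_inj => /=.
  by rewrite subnKC.
have botZ : ZCG (zp y' bot).
  apply: zpL_mem; first exact: ZCG_sg.
  move=> i; case: (ltnP i n) => [lt|ge'].
    have -> : bot 0 i = 0 by rewrite /bot /top !mxE lt subrr.
    exact: (sg1 ZCG_sg).
  exact: (sg_zpow _ ZCG_sg (yZ i ge')).
have topZ : derived (zp y' top).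
  have := sgM (@derived_sg G) dg (sgV (@derived_sg G) (proj2 botZ)).
  by rewrite gsplit; gsimpl.
have top0 : top = 0.
  have h1 : zp y' top = F (top *m U *m M) ** zp bf (top *m U) by rewrite zpy' zpyF.
  have : derived (F (top *m U *m M)).
    have := sgM (@derived_sg G) topZ (sgV (@derived_sg G) (proj2 (bZ (top *m U)))).
    by rewrite h1; gsimpl.
  move/F_der; rewrite -mulmxA UM mulmxA => tDR.
  have tD : top *m Dm = 0 by rewrite -(mulmxK Ru (top *m Dm)) tDR mul0mx.
  apply/rowP => i; rewrite [RHS]mxE /top mxE; case: ifP => // lt.
  have := congr1 (fun A : 'rV[int]_n => A 0 (Ordinal lt)) tD; rewrite !mxE.
  rewrite (bigD1 i) //= big1 ?addr0; last first.
    move=> k ki; rewrite !mxE.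
    have -> : (k == Ordinal lt :> nat) = false.
      by apply/negbTE; move: ki; apply: contra => /eqP e1; apply/eqP/val_inj.
    by rewrite mulr0n mulr0.
  rewrite !mxE lt /= eqxx mulr1n => /eqP; rewrite mulf_eq0 (negPf (dnz' i lt)) orbF.
  by move/eqP.
suff -> : g = zp y' bot by [].
by rewrite gsplit top0 /zp zpL0 gmul1.
Qed.

Lemma part2 : exists r : nat,
      has_rank (fun g : G => center g /\ derived g) r /\
      has_rank (@center G) (n + r).
Proof.
exists rk; split.
  by have [h1 h2] := rk_spec; split.
split; first exact: upper.
exact: lower.
Qed.

End Main.


End PM.
Import PM.

Theorem proposition5 (G : group) (n : nat) (x : 'I_n -> G)
  (hgen : forall g : G, gen (fun a => exists i, a = x i) g)
  (hfin : finite_set (@derived G))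
  (hbasis : forall k : 'I_n -> int, derived (zprod x k) -> forall i, k i = 0%R) :
  (exists Zt : G -> Prop,
      subgroup Zt /\
      (forall g, Zt g -> center g) /\
      iso_Zn Zt n /\
      (forall g, Zt g -> center g -> derived g -> g = gone G) /\
      (forall z, center z <->
         exists a b, Zt a /\ (center b /\ derived b) /\ z = gmul a b)) /\
  (exists r : nat,
      has_rank (fun g : G => center g /\ derived g) r /\
      has_rank (@center G) (n + r)).
Proof. split; [exact: part1 hbasis | exact: part2 hbasis]. Qed.
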